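(* Let $(G,\omega,\mu)$ be an infinite, connected weighted graph, and let $d$ be a pseudo metric on $G$ which is intrinsic, is also $1$-intrinsic with bound $C_0>0$, has finite jump size $s$, and has finite balls. Let $V:G\to\mathbb{R}$ satisfy $c_0:=\inf_G V>0$. Let $u$ be a solution of $\Delta u - Vu=0$ in $G$. Let $p\ge1$ and $\alpha>0$ be such that $$C_0\,\alpha\, e^{s\alpha} < c_0 p.$$ Fix $x_0\in G$ and suppose $u\in\ell^p_{\varphi_\alpha}(G,\mu)$, where $\varphi_\alpha(x)=e^{-\alpha d(x,x_0)}$. Then $u(x)=0$ for all $x\in G$.
   Context: A weighted graph $(G,\omega,\mu)$: $G$ countable, $\mu:G\to(0,\infty)$, $\omega:G\times G\to[0,\infty)$ symmetric with $\omega(x,x)=0$ and $\sum_y\omega(x,y)<\infty$; $x\sim y$ iff $\omega(x,y)>0$; connected means any two vertices are joined by a finite path. Laplacian $\Delta f(x)=\frac{1}{\mu(x)}\sum_{y}[f(y)-f(x)]\omega(x,y)$. A pseudo metric $d$ is a symmetric nonnegative function with $d(x,x)=0$ satisfying the triangle inequality. Jump size $s:=\sup\{d(x,y):\omega(x,y)>0\}$. For $q\ge1$, $C_0>0$, $d$ is $q$-intrinsic with bound $C_0$ if $\frac{1}{\mu(x)}\sum_y\omega(x,y)d^q(x,y)\le C_0$ for all $x$; intrinsic means $2$-intrinsic with bound $1$. $B_r(x)=\{y:d(y,x)<r\}$; finite balls means each $B_r(x)$ is finite. For $\varphi:G\to(0,\infty)$, $\ell^p_\varphi(G,\mu)=\{u:\sum_x|u(x)|^p\varphi(x)\mu(x)<\infty\}$.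 *)

(* Defs.v *)
From Stdlib Require Import Reals List Lra.
Open Scope R_scope.

Definition fin_sum {T : Type} (f : T -> R) (L : list T) : R :=
  fold_right (fun x acc => f x + acc) 0 L.

(* Unconditional summation over an arbitrary (countable) index type:
   the net of finite partial sums (over finite subsets, given as
   duplicate-free lists) converges to S. For real series this is
   absolute summability with sum S. *)
Definition has_sum {T : Type} (f : T -> R) (S : R) : Prop :=
  forall eps, 0 < eps ->
    exists L0 : list T, forall L : list T,
      NoDup L -> incl L0 L -> Rabs (fin_sum f L - S) < eps.

(* For nonnegative f: "sum_x f x <= C" (sum = sup of finite partial sums). *)
Definition sum_le {T : Type} (f : T -> R) (C : R) : Prop :=
  forall L : list T, NoDup L -> fin_sum f L <= C.

(* Real power of a nonnegative number, with 0^q = 0 (q > 0). *)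
Definition rpow (x q : R) : R :=
  if Rle_dec x 0 then 0 else Rpower x q.

Definition countable_type (G : Type) : Prop :=
  exists f : G -> nat, forall x y, f x = f y -> x = y.

Definition infinite_type (G : Type) : Prop :=
  exists f : nat -> G, forall m n, f m = f n -> m = n.

Definition weighted_graph {G : Type} (w : G -> G -> R) (mu : G -> R) : Prop :=
  countable_type G /\
  (forall x, 0 < mu x) /\
  (forall x y, 0 <= w x y) /\
  (forall x y, w x y = w y x) /\
  (forall x, w x x = 0) /\
  (forall x, exists S, has_sum (w x) S).

Fixpoint is_path {G : Type} (w : G -> G -> R) (x : G) (l : list G) (y : G)
  : Prop :=
  match l with
  | nil => x = y
  | z :: l' => 0 < w x z /\ is_path w z l' y
  end.

Definition connected {G : Type} (w : G -> G -> R) : Prop :=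
  forall x y : G, exists l, is_path w x l y.

Definition pseudo_metric {G : Type} (d : G -> G -> R) : Prop :=
  (forall x y, 0 <= d x y) /\
  (forall x, d x x = 0) /\
  (forall x y, d x y = d y x) /\
  (forall x y z, d x z <= d x y + d y z).

Definition q_intrinsic {G : Type} (w : G -> G -> R) (mu : G -> R)
  (d : G -> G -> R) (q C0 : R) : Prop :=
  forall x, sum_le (fun y => w x y * rpow (d x y) q) (C0 * mu x).

Definition intrinsic {G : Type} w mu (d : G -> G -> R) : Prop :=
  @q_intrinsic G w mu d 2 1.

Definition jump_size {G : Type} (w d : G -> G -> R) (s : R) : Prop :=
  is_lub (fun r => exists x y, 0 < w x y /\ r = d x y) s.

Definition finite_balls {G : Type} (d : G -> G -> R) : Prop :=
  forall x r, exists L : list G, forall y, d y x < r -> In y L.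

Definition is_inf {G : Type} (V : G -> R) (c0 : R) : Prop :=
  (forall x, c0 <= V x) /\ (forall c, (forall x, c <= V x) -> c <= c0).

Definition laplacian_at {G : Type} (w : G -> G -> R) (mu : G -> R)
  (u : G -> R) (x : G) (L : R) : Prop :=
  exists S, has_sum (fun y => (u y - u x) * w x y) S /\ L = S / mu x.

Definition solves_schrodinger {G : Type} w mu (V u : G -> R) : Prop :=
  forall x : G, @laplacian_at G w mu u x (V x * u x).

Definition in_lp_weighted {G : Type} (mu : G -> R) (p : R)
  (phi u : G -> R) : Prop :=
  exists M, sum_le (fun x => rpow (Rabs (u x)) p * phi x * mu x) M.

(* Main.v *)
Require Import Defs.
From Stdlib Require Import Reals List Lra.
Open Scope R_scope.

Lemma fin_sum_nil {T} (f : T -> R) : fin_sum f nil = 0.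
Proof. reflexivity. Qed.
Lemma fin_sum_cons {T} (f : T -> R) a L : fin_sum f (a :: L) = f a + fin_sum f L.
Proof. reflexivity. Qed.

Lemma fin_sum_ext {T} (f g : T -> R) L :
  (forall x, In x L -> f x = g x) -> fin_sum f L = fin_sum g L.
Proof.
  induction L as [|a L IH]; intros H; simpl; auto.
  rewrite H by (left; auto). rewrite IH; auto. intros; apply H; right; auto.
Qed.

Lemma fin_sum_le {T} (f g : T -> R) L :
  (forall x, In x L -> f x <= g x) -> fin_sum f L <= fin_sum g L.
Proof.
  induction L as [|a L IH]; intros H; simpl. lra.
  assert (f a <= g a) by (apply H; left; auto).
  assert (fin_sum f L <= fin_sum g L) by (apply IH; intros; apply H; right; auto).
  lra.
Qed.

Lemma fin_sum_plus {T} (f g : T -> R) L :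
  fin_sum (fun x => f x + g x) L = fin_sum f L + fin_sum g L.
Proof. induction L; simpl; [lra|rewrite IHL; lra]. Qed.

Lemma fin_sum_minus {T} (f g : T -> R) L :
  fin_sum (fun x => f x - g x) L = fin_sum f L - fin_sum g L.
Proof. induction L; simpl; [lra|rewrite IHL; lra]. Qed.

Lemma fin_sum_scal {T} (c : R) (f : T -> R) L :
  fin_sum (fun x => c * f x) L = c * fin_sum f L.
Proof. induction L; simpl; [lra|rewrite IHL; lra]. Qed.

Lemma fin_sum_nonneg {T} (f : T -> R) L :
  (forall x, In x L -> 0 <= f x) -> 0 <= fin_sum f L.
Proof.
  intros H. replace 0 with (fin_sum (fun _ : T => 0) L).
  apply fin_sum_le; auto. induction L; simpl; auto. rewrite IHL; [lra|].
  intros; apply H; right; auto.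
Qed.

Lemma fin_sum_swap {T} (h : T -> T -> R) (L1 L2 : list T) :
  fin_sum (fun x => fin_sum (fun y => h x y) L2) L1 =
  fin_sum (fun y => fin_sum (fun x => h x y) L1) L2.
Proof.
  induction L1 as [|a L1 IH]; simpl.
  - induction L2; simpl; auto. rewrite <- IHL2; lra.
  - rewrite IH. rewrite <- fin_sum_plus. reflexivity.
Qed.

Lemma fin_sum_app {T} (f : T -> R) L1 L2 :
  fin_sum f (L1 ++ L2) = fin_sum f L1 + fin_sum f L2.
Proof. induction L1; simpl; [lra|rewrite IHL1; lra]. Qed.

Lemma fin_sum_sub {T} (f : T -> R) (L' L : list T) :
  (forall x, 0 <= f x) -> NoDup L' -> incl L' L -> fin_sum f L' <= fin_sum f L.
Proof.
  revert L. induction L' as [|a L' IH]; intros L Hf Hnd Hinc; simpl.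
  - apply fin_sum_nonneg; auto.
  - assert (Ha : In a L) by (apply Hinc; left; auto).
    destruct (in_split a L Ha) as [L1 [L2 ->]].
    rewrite fin_sum_app; simpl.
    assert (fin_sum f L' <= fin_sum f (L1 ++ L2)).
    { apply IH; auto. inversion Hnd; auto.
      intros z Hz. inversion Hnd; subst.
      assert (Hz' : In z (L1 ++ a :: L2)) by (apply Hinc; right; auto).
      apply in_app_or in Hz'. apply in_or_app. destruct Hz' as [H|[H|H]]; auto.
      subst; contradiction. }
    rewrite fin_sum_app in H. lra.
Qed.

Lemma fin_sum_count {T} (dec : forall x y : T, {x = y} + {x <> y}) (f : T -> R) (K L : list T) :
  NoDup L -> (forall x, 0 <= f x <= 1) -> (forall x, In x L -> f x <> 0 -> In x K) ->
  fin_sum f L <= INR (length K).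
Proof.
  revert K. induction L as [|a L IH]; intros K Hnd Hf HK; simpl.
  - apply pos_INR.
  - inversion Hnd; subst.
    destruct (Req_dec (f a) 0) as [E|E].
    + rewrite E. assert (fin_sum f L <= INR (length K)); [|lra].
      apply IH; auto. intros; apply HK; auto; right; auto.
    + assert (Ha : In a K) by (apply HK; auto; left; auto).
      assert (IH' : fin_sum f L <= INR (length (remove dec a K))).
      { apply (IH (remove dec a K) H2 Hf). intros z Hz Hfz.
        apply in_in_remove.
        - intro; subst; contradiction.
        - apply HK; auto; right; auto. }
      assert (f a <= 1) by apply Hf.
      assert (INR (length (remove dec a K)) + 1 <= INR (length K)).
      { apply Rle_trans with (INR (S (length (remove dec a K)))).
        rewrite S_INR; lra. apply le_INR. exact (remove_length_lt dec K a Ha). }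
      lra.
Qed.

Lemma Rpower_pos' x y : 0 < Rpower x y.
Proof. unfold Rpower; apply exp_pos. Qed.

Lemma Rpower_1_base y : Rpower 1 y = 1.
Proof. unfold Rpower; rewrite ln_1, Rmult_0_r; apply exp_0. Qed.

Lemma bernoulli z p : 0 < z -> 1 <= p -> 1 + p * (z - 1) <= Rpower z p.
Proof.
  intros Hz Hp.
  set (h := fun t => Rpower t p - p * t).
  assert (Hd : forall c, 0 < c -> derivable_pt_lim h c (p * Rpower c (p - 1) - p * 1)).
  { intros c Hc. unfold h. apply derivable_pt_lim_minus.
    apply derivable_pt_lim_power; auto.
    apply derivable_pt_lim_scal. apply derivable_pt_lim_id. }
  assert (h 1 = 1 - p) by (unfold h; rewrite Rpower_1_base; lra).
  destruct (Rtotal_order z 1) as [Hlt|[Heq|Hgt]].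
  - destruct (MVT_cor2 h (fun c => p * Rpower c (p - 1) - p * 1) z 1 Hlt) as [c [Hc1 Hc2]].
    { intros c Hc; apply Hd; lra. }
    assert (Rpower c (p-1) <= 1).
    { apply Rle_trans with (Rpower 1 (p-1)); [apply Rle_Rpower_l; lra | rewrite Rpower_1_base; lra]. }
    assert (0 <= (p - p*Rpower c (p-1)) * (1 - z)) by (apply Rmult_le_pos; nra).
    assert (h z >= 1 - p) by nra.
    unfold h in *. lra.
  - subst. rewrite Rpower_1_base. lra.
  - destruct (MVT_cor2 h (fun c => p * Rpower c (p - 1) - p * 1) 1 z Hgt) as [c [Hc1 Hc2]].
    { intros c Hc; apply Hd; lra. }
    assert (1 <= Rpower c (p-1)).
    { apply Rle_trans with (Rpower 1 (p-1)); [rewrite Rpower_1_base; lra | apply Rle_Rpower_l; lra]. }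
    assert (0 <= (p*Rpower c (p-1) - p) * (z - 1)) by (apply Rmult_le_pos; nra).
    assert (h z >= 1 - p) by nra.
    unfold h in *. lra.
Qed.

Lemma rpow_convex a t p : 0 < a -> 0 <= t -> 1 <= p ->
  p * Rpower a (p - 1) * (t - a) <= rpow t p - Rpower a p.
Proof.
  intros Ha Ht Hp.
  assert (Hap : Rpower a p = Rpower a (p - 1) * a).
  { rewrite <- (Rpower_1 a) at 3 by auto. rewrite <- Rpower_plus. f_equal; ring. }
  pose proof (Rpower_pos' a (p-1)).
  unfold rpow. destruct (Rle_dec t 0) as [Ht0|Ht0].
  - assert (t = 0) by lra. subst. rewrite Hap.
    assert (0 <= (p-1)*(Rpower a (p - 1)*a)) by (apply Rmult_le_pos; nra). nra.
  - assert (Ht' : 0 < t) by lra.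
    replace t with (a * (t / a)) at 2 by (field; lra).
    assert (Hz : 0 < t / a) by (apply Rdiv_lt_0_compat; lra).
    rewrite <- Rpower_mult_distr by auto.
    pose proof (bernoulli (t/a) p Hz Hp).
    rewrite Hap.
    assert (p * Rpower a (p - 1) * (t - a) = Rpower a (p-1) * a * (p * (t/a - 1))) by (field; lra).
    rewrite H1.
    assert (0 <= (Rpower a (p - 1)*a)*(Rpower (t/a) p - (1 + p * (t / a - 1)))) by (apply Rmult_le_pos; nra).
    nra.
Qed.

Lemma exp_bound t : 0 <= t -> exp t - 1 <= t * exp t.
Proof.
  intros Ht. pose proof (exp_ineq1_le (- t)).
  assert (exp (-t) * exp t = 1) by (rewrite <- exp_plus; replace (-t + t) with 0 by ring; apply exp_0).
  pose proof (exp_pos t). nra.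
Qed.

Definition clamp (t : R) := Rmin 1 (Rmax 0 t).

Lemma clamp_range t : 0 <= clamp t <= 1.
Proof. unfold clamp, Rmin, Rmax; repeat destruct Rle_dec; lra. Qed.

Lemma clamp_lip t1 t2 : clamp t1 - clamp t2 <= Rabs (t1 - t2).
Proof.
  unfold clamp, Rmin, Rmax; unfold Rabs; repeat destruct Rle_dec; repeat destruct Rcase_abs; lra.
Qed.

Lemma clamp_1 t : 1 <= t -> clamp t = 1.
Proof. unfold clamp, Rmin, Rmax; repeat destruct Rle_dec; lra. Qed.
Lemma clamp_0 t : t <= 0 -> clamp t = 0.
Proof. unfold clamp, Rmin, Rmax; repeat destruct Rle_dec; lra. Qed.

Lemma rpow_nonneg x q : 0 <= rpow x q.
Proof. unfold rpow; destruct Rle_dec; [lra| left; apply Rpower_pos']. Qed.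

Lemma rpow_pos_eq x q : 0 < x -> rpow x q = Rpower x q.
Proof. intros; unfold rpow; destruct Rle_dec; [lra|auto]. Qed.

Lemma Rpower_pm1 a p : 0 < a -> Rpower a (p - 1) * a = Rpower a p.
Proof. intros Ha. rewrite <- (Rpower_1 a) at 2 by auto. rewrite <- Rpower_plus. f_equal; ring. Qed.

Lemma local_ineq {G : Type} (w : G -> G -> R) (mu V u : G -> R) (c0 p : R) (x : G) (eps : R) :
  (forall x y, 0 <= w x y) -> (forall x, 0 < mu x) -> (forall x, c0 <= V x) -> 0 < c0 ->
  solves_schrodinger w mu V u -> 1 <= p -> 0 < eps ->
  exists L0, forall L, NoDup L -> incl L0 L ->
    c0 * p * mu x * rpow (Rabs (u x)) p - eps <=
    fin_sum (fun y => w x y * (rpow (Rabs (u y)) p - rpow (Rabs (u x)) p)) L.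
Proof.
  intros Hw Hmu HV Hc0 Hsol Hp Heps.
  destruct (Req_dec (u x) 0) as [Hu0|Hu0].
  - exists nil. intros L _ _.
    assert (Hf : rpow (Rabs (u x)) p = 0).
    { rewrite Hu0, Rabs_R0. unfold rpow. destruct Rle_dec; lra. }
    rewrite Hf.
    assert (0 <= fin_sum (fun y => w x y * (rpow (Rabs (u y)) p - 0)) L).
    { apply fin_sum_nonneg. intros y _. pose proof (Hw x y). pose proof (rpow_nonneg (Rabs (u y)) p). nra. }
    lra.
  - set (a := Rabs (u x)).
    assert (Ha : 0 < a) by (apply Rabs_pos_lt; auto).
    destruct (Hsol x) as [S [HS HVS]].
    pose proof (Hmu x) as Hmux.
    assert (HSe : S = V x * u x * mu x) by (rewrite HVS; field; lra).
    set (B := p * Rpower a (p - 1)).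
    assert (HB : 0 < B) by (unfold B; pose proof (Rpower_pos' a (p-1)); nra).
    destruct (HS (eps / B)) as [L0 HL0].
    { apply Rdiv_lt_0_compat; lra. }
    exists L0. intros L Hnd Hinc.
    specialize (HL0 L Hnd Hinc).
    assert (Hsig : exists sg, (sg = 1 \/ sg = -1) /\ sg * u x = a).
    { unfold a, Rabs; destruct Rcase_abs; [exists (-1)|exists 1]; split; auto; lra. }
    destruct Hsig as [sg [Hsg Hsga]].
    assert (Hfx : rpow a p = Rpower a p) by (apply rpow_pos_eq; auto).
    assert (Hterm : forall y, B * (sg * ((u y - u x) * w x y)) <= w x y * (rpow (Rabs (u y)) p - rpow a p)).
    { intros y. rewrite Hfx.
      pose proof (rpow_convex a (Rabs (u y)) p Ha (Rabs_pos _) Hp) as Hc.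
      fold B in Hc.
      assert (sg * u y <= Rabs (u y)).
      { destruct Hsg as [->| ->]. rewrite Rmult_1_l; apply Rle_abs.
        rewrite <- Rabs_Ropp. replace (-1 * u y) with (- u y) by ring. apply Rle_abs. }
      assert (sg * (u y - u x) <= Rabs (u y) - a) by lra.
      pose proof (Hw x y).
      assert (B * (sg * (u y - u x)) <= B * (Rabs (u y) - a)) by (apply Rmult_le_compat_l; lra).
      assert (B * (sg * ((u y - u x) * w x y)) = (B * (sg * (u y - u x))) * w x y) by ring.
      nra. }
    assert (Hsum : B * (sg * fin_sum (fun y => (u y - u x) * w x y) L) <=
             fin_sum (fun y => w x y * (rpow (Rabs (u y)) p - rpow a p)) L).
    { rewrite <- fin_sum_scal, <- fin_sum_scal. apply fin_sum_le. intros y _. apply Hterm. }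
    set (Sig := fin_sum (fun y => (u y - u x) * w x y) L) in *.
    assert (Hd : sg * Sig >= sg * S - eps / B).
    { assert (Rabs (sg * (Sig - S)) < eps / B).
      { rewrite Rabs_mult.
        assert (Rabs sg = 1) by (destruct Hsg as [->| ->]; unfold Rabs; destruct Rcase_abs; lra).
        rewrite H. lra. }
      pose proof (Rle_abs (- (sg * (Sig - S)))). rewrite Rabs_Ropp in H0. lra. }
    assert (HsgS : sg * S = V x * a * mu x) by (rewrite HSe, <- Hsga; ring).
    assert (Hmain : B * (sg * Sig) >= B * (V x * a * mu x) - eps).
    { assert (B * (sg * Sig) >= B * (sg * S - eps / B)) by (apply Rmult_ge_compat_l; lra).
      assert (B * (eps / B) = eps) by (field; lra). nra. }
    assert (HBa : B * (V x * a * mu x) = p * V x * mu x * Rpower a p).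
    { unfold B. rewrite <- (Rpower_pm1 a p Ha). ring. }
    assert (c0 * p * mu x * Rpower a p <= p * V x * mu x * Rpower a p).
    { pose proof (Rpower_pos' a p). pose proof (HV x).
      assert (0 <= (V x - c0) * (p * mu x * Rpower a p)) by (apply Rmult_le_pos; [lra| apply Rmult_le_pos; [apply Rmult_le_pos|]; lra]).
      replace (p * V x * mu x * Rpower a p) with (c0 * p * mu x * Rpower a p + (V x - c0) * (p * mu x * Rpower a p)) by ring. lra. }
    fold a. rewrite Hfx in *. lra.
Qed.

Lemma exp_le' x y : x <= y -> exp x <= exp y.
Proof. intros H; destruct (Rle_lt_or_eq_dec _ _ H) as [H'|H']; [left; apply exp_increasing; auto| subst; lra]. Qed.

Lemma psi_bound (dxy dx dy alpha s R : R) :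
  0 < alpha -> 0 < R -> 0 <= dxy -> dxy <= s -> dx <= dxy + dy -> dy <= dxy + dx ->
  exp (- alpha * dy) * clamp ((2 * R - dy) / R) - exp (- alpha * dx) * clamp ((2 * R - dx) / R)
  <= exp (- alpha * dx) * (alpha * exp (s * alpha) + / R) * dxy.
Proof.
  intros Ha HR Hd0 Hds H1 H2.
  set (px := exp (- alpha * dx)). set (py := exp (- alpha * dy)).
  set (ex := clamp ((2 * R - dx) / R)). set (ey := clamp ((2 * R - dy) / R)).
  assert (Hpx : 0 < px) by apply exp_pos.
  assert (Hey := clamp_range ((2 * R - dy) / R)). fold ey in Hey.
  assert (Hpy : py <= px * exp (alpha * dxy)).
  { unfold px, py. rewrite <- exp_plus. apply exp_le'. nra. }
  assert (Hb : exp (alpha * dxy) - 1 <= alpha * dxy * exp (s * alpha)).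
  { pose proof (exp_bound (alpha * dxy)) as Hb. 
    assert (exp (alpha * dxy) <= exp (s * alpha)) by (apply exp_le'; nra).
    assert (0 <= alpha * dxy) by nra. nra. }
  assert (P1 : ey * (py - px) <= px * alpha * exp (s * alpha) * dxy).
  { assert (py - px <= px * (alpha * dxy * exp (s * alpha))) by nra.
    assert (0 <= px * alpha * exp (s * alpha) * dxy).
    { pose proof (exp_pos (s*alpha)). apply Rmult_le_pos; [|lra].
      apply Rmult_le_pos; [|lra]. nra. }
    destruct (Rle_dec 0 (py - px)); nra. }
  assert (P2 : ey - ex <= dxy / R).
  { eapply Rle_trans. apply clamp_lip. apply Rabs_le.
    replace ((2 * R - dy) / R - (2 * R - dx) / R) with ((dx - dy) / R) by (field; lra).
    split; unfold Rdiv; [rewrite Ropp_mult_distr_l|]; apply Rmult_le_compat_r; try (left; apply Rinv_0_lt_compat; lra); lra. }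
  assert (px * (ey - ex) <= px * (dxy / R)) by (apply Rmult_le_compat_l; lra).
  replace (py * ey - px * ex) with (ey * (py - px) + px * (ey - ex)) by ring.
  replace (px * (alpha * exp (s * alpha) + / R) * dxy) with (px * alpha * exp (s * alpha) * dxy + px * (dxy / R)) by (field; lra).
  lra.
Qed.

Lemma collect {G : Type} (P : G -> list G -> Prop) (K : list G) :
  (forall x, In x K -> exists L0, forall L, NoDup L -> incl L0 L -> P x L) ->
  exists Lb, forall x, In x K -> forall L, NoDup L -> incl Lb L -> P x L.
Proof.
  induction K as [|a K IH]; intros H.
  - exists nil. intros x [].
  - destruct (H a (or_introl eq_refl)) as [La HLa].
    destruct IH as [Lb HLb]. { intros; apply H; right; auto. }
    exists (La ++ Lb). intros x [<-|Hx] L Hnd Hinc.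
    + apply HLa; auto. intros z Hz; apply Hinc, in_or_app; auto.
    + apply HLb; auto. intros z Hz; apply Hinc, in_or_app; auto.
Qed.

Lemma global_bound {G : Type} (dec : forall x y : G, {x = y} + {x <> y})
  (w : G -> G -> R) (mu : G -> R) (d : G -> G -> R) (f : G -> R)
  (C0 s c alpha M : R) (x0 : G) :
  (forall x y, 0 <= w x y) -> (forall x y, w x y = w y x) -> (forall x, 0 < mu x) ->
  pseudo_metric d -> q_intrinsic w mu d 1 C0 -> 0 < C0 ->
  (forall x y, 0 < w x y -> d x y <= s) -> finite_balls d ->
  (forall x, 0 <= f x) -> 0 < c -> 0 < alpha ->
  (forall x eps, 0 < eps -> exists L0, forall L, NoDup L -> incl L0 L ->
      c * mu x * f x - eps <= fin_sum (fun y => w x y * (f y - f x)) L) ->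
  sum_le (fun x => f x * exp (- alpha * d x x0) * mu x) M ->
  forall R, 0 < R -> forall L', NoDup L' -> (forall x, In x L' -> d x x0 <= R) ->
  forall delta, 0 < delta ->
  c * fin_sum (fun x => f x * exp (- alpha * d x x0) * mu x) L'
    <= (alpha * exp (s * alpha) + / R) * C0 * M + delta.
Proof.
  intros Hw Hsym Hmu [Hd0 [Hdd [Hdsym Hdtri]]] Hint HC0 Hjump Hball Hf Hc Ha Hloc HM
    R HR L' HL' HL'R delta Hdelta.
  set (phi := fun x => exp (- alpha * d x x0)).
  set (eta := fun x => clamp ((2 * R - d x x0) / R)).
  set (psi := fun x => phi x * eta x).
  destruct (Hball x0 (2 * R)) as [K HK].
  assert (Hphi : forall x, 0 < phi x <= 1).
  { intros x; unfold phi; split; [apply exp_pos|].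
    rewrite <- exp_0. apply exp_le'. pose proof (Hd0 x x0). nra. }
  assert (Hpsi : forall x, 0 <= psi x <= 1).
  { intros x; unfold psi. pose proof (Hphi x). pose proof (clamp_range ((2 * R - d x x0) / R)).
    fold (eta x) in H0. nra. }
  assert (Hsupp : forall x, psi x <> 0 -> In x K).
  { intros x Hx. apply HK. destruct (Rlt_dec (d x x0) (2 * R)) as [h|h]; auto.
    exfalso. apply Hx. unfold psi, eta. rewrite clamp_0; [ring|].
    unfold Rdiv. assert (0 < / R) by (apply Rinv_0_lt_compat; lra). nra. }
  set (eps := delta / (INR (length K) + 1)).
  assert (HK1 : 0 < INR (length K) + 1) by (pose proof (pos_INR (length K)); lra).
  assert (Heps : 0 < eps) by (apply Rdiv_lt_0_compat; lra).
  destruct (collect (fun x L => c * mu x * f x - eps <= fin_sum (fun y => w x y * (f y - f x)) L) K)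
    as [Lb HLb].
  { intros x _. apply Hloc; auto. }
  set (L := nodup dec (Lb ++ L')).
  assert (HndL : NoDup L) by apply NoDup_nodup.
  assert (HincLb : incl Lb L) by (intros z Hz; apply nodup_In, in_or_app; auto).
  assert (HincL' : incl L' L) by (intros z Hz; apply nodup_In, in_or_app; auto).
  set (A := fun x => fin_sum (fun y => w x y * (f y - f x)) L).
  assert (Hlow : forall x, In x L -> psi x * (c * mu x * f x - eps) <= psi x * A x).
  { intros x _. destruct (Req_dec (psi x) 0) as [E|E].
    - rewrite E; lra.
    - apply Rmult_le_compat_l; [apply Hpsi|]. apply HLb; auto. }
  assert (Hlow2 : c * fin_sum (fun x => psi x * f x * mu x) L - eps * INR (length K)
                  <= fin_sum (fun x => psi x * A x) L).
  { eapply Rle_trans; [|apply fin_sum_le; exact Hlow].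
    rewrite (fin_sum_ext (fun x => psi x * (c * mu x * f x - eps)) (fun x => c * (psi x * f x * mu x) - eps * psi x) L)
      by (intros; ring).
    rewrite fin_sum_minus, !fin_sum_scal.
    assert (fin_sum psi L <= INR (length K)) by (apply (fin_sum_count dec); auto).
    assert (eps * fin_sum psi L <= eps * INR (length K)) by (apply Rmult_le_compat_l; lra).
    lra. }
  assert (E1 : forall x, In x L -> psi x * A x = fin_sum (fun y => w x y * psi x * f y) L
                 - fin_sum (fun y => w x y * psi x * f x) L).
  { intros x _. unfold A. rewrite <- fin_sum_minus, <- fin_sum_scal. apply fin_sum_ext; intros; ring. }
  assert (E2 : forall x, In x L -> fin_sum (fun y => w x y * f x * (psi y - psi x)) L =
      fin_sum (fun y => w x y * f x * psi y) L - fin_sum (fun y => w x y * psi x * f x) L).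
  { intros x _; rewrite <- fin_sum_minus; apply fin_sum_ext; intros; ring. }
  assert (E3 : fin_sum (fun x => fin_sum (fun y => w x y * psi x * f y) L) L =
               fin_sum (fun x => fin_sum (fun y => w x y * f x * psi y) L) L).
  { rewrite fin_sum_swap. apply fin_sum_ext; intros a _. apply fin_sum_ext; intros b _.
    rewrite (Hsym b a); ring. }
  assert (Hid : fin_sum (fun x => psi x * A x) L =
                fin_sum (fun x => fin_sum (fun y => w x y * f x * (psi y - psi x)) L) L).
  { rewrite (fin_sum_ext _ _ L E1), (fin_sum_ext _ _ L E2), !fin_sum_minus, E3. reflexivity. }
  set (k := alpha * exp (s * alpha) + / R).
  assert (Hk : 0 <= k).
  { unfold k. pose proof (exp_pos (s * alpha)). assert (0 < / R) by (apply Rinv_0_lt_compat; lra). nra. }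
  assert (Hup : forall x, In x L -> fin_sum (fun y => w x y * f x * (psi y - psi x)) L
                 <= (k * C0) * (f x * phi x * mu x)).
  { intros x _.
    assert (Ht : forall y, In y L -> w x y * f x * (psi y - psi x) <=
                 (f x * phi x * k) * (w x y * rpow (d x y) 1)).
    { intros y _. destruct (Req_dec (w x y) 0) as [E|E].
      - rewrite E. pose proof (rpow_nonneg (d x y) 1). pose proof (Hphi x). pose proof (Hf x).
        assert (0 <= f x * phi x * k) by (apply Rmult_le_pos; [|lra]; apply Rmult_le_pos; lra).
        nra.
      - assert (Hwp : 0 < w x y) by (pose proof (Hw x y); lra).
        assert (Hr : rpow (d x y) 1 = d x y).
        { unfold rpow. destruct Rle_dec. pose proof (Hd0 x y); lra. apply Rpower_1; lra. }
        rewrite Hr.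
        assert (Hb : psi y - psi x <= phi x * k * d x y).
        { unfold psi, phi, eta, k. apply psi_bound; [lra|lra|apply Hd0|apply Hjump; lra|apply Hdtri|].
          rewrite (Hdsym x y). apply Hdtri. }
        assert (0 <= w x y * f x) by (pose proof (Hf x); nra).
        assert (w x y * f x * (psi y - psi x) <= w x y * f x * (phi x * k * d x y))
          by (apply Rmult_le_compat_l; lra).
        nra. }
    eapply Rle_trans; [apply fin_sum_le; exact Ht|].
    rewrite fin_sum_scal.
    pose proof (Hint x L HndL) as HI. simpl in HI.
    assert (0 <= f x * phi x * k).
    { pose proof (Hphi x); pose proof (Hf x). apply Rmult_le_pos; [|lra]; apply Rmult_le_pos; lra. }
    assert (f x * phi x * k * fin_sum (fun y => w x y * rpow (d x y) 1) L <= f x * phi x * k * (C0 * mu x))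
      by (apply Rmult_le_compat_l; auto).
    lra. }
  assert (Hup2 : fin_sum (fun x => psi x * A x) L <= (k * C0) * M).
  { rewrite Hid. eapply Rle_trans; [apply fin_sum_le; exact Hup|].
    rewrite fin_sum_scal. apply Rmult_le_compat_l. apply Rmult_le_pos; lra.
    apply HM; auto. }
  assert (Hsub : fin_sum (fun x => f x * exp (- alpha * d x x0) * mu x) L'
                 <= fin_sum (fun x => psi x * f x * mu x) L).
  { rewrite (fin_sum_ext (fun x => f x * exp (- alpha * d x x0) * mu x) (fun x => psi x * f x * mu x) L').
    - apply fin_sum_sub; auto. intros x. pose proof (Hpsi x); pose proof (Hf x); pose proof (Hmu x).
      apply Rmult_le_pos; [apply Rmult_le_pos|]; lra.
    - intros x Hx. unfold psi, eta, phi. rewrite clamp_1; [ring|].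
      pose proof (HL'R x Hx).
      assert (0 <= (R - d x x0) / R) by (apply Rmult_le_pos; [lra| left; apply Rinv_0_lt_compat; lra]).
      replace ((2 * R - d x x0) / R) with (1 + (R - d x x0) / R) by (field; lra). lra. }
  assert (Heps2 : eps * INR (length K) <= delta).
  { unfold eps. pose proof (pos_INR (length K)).
    replace (delta / (INR (length K) + 1) * INR (length K)) with (delta - delta / (INR (length K) + 1)) by (field; lra).
    assert (0 < delta / (INR (length K) + 1)) by (apply Rdiv_lt_0_compat; lra). lra. }
  assert (c * fin_sum (fun x => f x * exp (- alpha * d x x0) * mu x) L' <= c * fin_sum (fun x => psi x * f x * mu x) L)
    by (apply Rmult_le_compat_l; lra).
  fold k. lra.
Qed.

Lemma list_bound {G : Type} (h : G -> R) (L : list G) : exists R0, forall x, In x L -> h x <= R0.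
Proof.
  induction L as [|a L [R0 HR0]].
  - exists 0. intros x [].
  - exists (Rmax (h a) R0). intros x [<-|Hx]. apply Rmax_l.
    eapply Rle_trans; [apply HR0; auto| apply Rmax_r].
Qed.

Theorem theorem3p3 (G : Type) (w : G -> G -> R) (mu : G -> R)
  (d : G -> G -> R) (C0 s : R) (V : G -> R) (c0 : R) (u : G -> R)
  (p alpha : R) (x0 : G) :
  weighted_graph w mu ->
  infinite_type G ->
  connected w ->
  pseudo_metric d ->
  intrinsic w mu d ->
  0 < C0 ->
  q_intrinsic w mu d 1 C0 ->
  jump_size w d s ->
  finite_balls d ->
  is_inf V c0 ->
  0 < c0 ->
  solves_schrodinger w mu V u ->
  1 <= p ->
  0 < alpha ->
  C0 * alpha * exp (s * alpha) < c0 * p ->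
  in_lp_weighted mu p (fun x => exp (- alpha * d x x0)) u ->
  forall x : G, u x = 0.
Proof.
  intros [[fi Hfi] [Hmu [Hw [Hsym [Hww Hdeg]]]]] _ _ Hpm _ HC0 Hint Hjs Hball [HV _] Hc0 Hsol Hp Ha Hgap
    [M HM].
  assert (dec : forall x y : G, {x = y} + {x <> y}).
  { intros x y. destruct (Nat.eq_dec (fi x) (fi y)) as [e|n].
    left; apply Hfi; auto. right; intro h; apply n; rewrite h; auto. }
  assert (Hjump : forall x y, 0 < w x y -> d x y <= s).
  { intros x y H. apply (proj1 Hjs). exists x, y; auto. }
  set (f := fun x => rpow (Rabs (u x)) p).
  set (g := fun x => f x * exp (- alpha * d x x0) * mu x).
  set (c := c0 * p).
  assert (Hc : 0 < c) by (unfold c; nra).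
  assert (Hf : forall x, 0 <= f x) by (intros; apply rpow_nonneg).
  assert (Hloc : forall x eps, 0 < eps -> exists L0, forall L, NoDup L -> incl L0 L ->
      c * mu x * f x - eps <= fin_sum (fun y => w x y * (f y - f x)) L).
  { intros x eps He. unfold c, f. apply (local_ineq w mu V u); auto. }
  assert (Hg : forall x, 0 <= g x).
  { intros x; unfold g. pose proof (Hf x); pose proof (Hmu x); pose proof (exp_pos (- alpha * d x x0)).
    apply Rmult_le_pos; [apply Rmult_le_pos|]; lra. }
  set (E := fun r => exists L, NoDup L /\ r = fin_sum g L).
  destruct (completeness E) as [F [HFub HFl]].
  { exists M. intros r [L [HL ->]]. apply HM; auto. }
  { exists 0. exists nil. split; [constructor|reflexivity]. }
  assert (HF0 : 0 <= F) by (apply HFub; exists nil; split; [constructor|reflexivity]).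
  assert (HFs : sum_le g F) by (intros L HL; apply HFub; exists L; auto).
  set (k0 := alpha * exp (s * alpha) * C0).
  assert (Hk0 : k0 < c) by (unfold k0, c; nra).
  assert (Hkey : forall L', NoDup L' -> c * fin_sum g L' <= k0 * F).
  { intros L' HL'. destruct (Rle_dec (c * fin_sum g L') (k0 * F)) as [h|h]; auto.
    exfalso. set (gap := c * fin_sum g L' - k0 * F).
    assert (Hgp : 0 < gap) by (unfold gap; lra).
    destruct (list_bound (fun x => d x x0) L') as [R0 HR0].
    set (R := Rmax (Rmax R0 1) (2 * C0 * F / gap + 1)).
    assert (HR1 : 1 <= R) by (unfold R; eapply Rle_trans; [apply Rmax_r|apply Rmax_l]).
    assert (HR2 : 2 * C0 * F / gap + 1 <= R) by (unfold R; apply Rmax_r).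
    assert (HRL : forall x, In x L' -> d x x0 <= R).
    { intros x Hx. eapply Rle_trans; [apply HR0; auto|].
      unfold R. eapply Rle_trans; [apply Rmax_l|apply Rmax_l]. }
    pose proof (global_bound dec w mu d f C0 s c alpha F x0 Hw Hsym Hmu Hpm Hint HC0 Hjump Hball
      Hf Hc Ha Hloc HFs R ltac:(lra) L' HL' HRL (gap / 2) ltac:(lra)) as Hgb.
    fold g in Hgb.
    assert (HCF : C0 * F / R < gap / 2).
    { apply Rmult_lt_reg_r with (2 * R); [lra|].
      replace (C0 * F / R * (2 * R)) with (2 * C0 * F) by (field; lra).
      replace (gap / 2 * (2 * R)) with (gap * R) by field.
      assert (2 * C0 * F / gap * gap = 2 * C0 * F) by (field; lra).
      assert (gap * (2 * C0 * F / gap + 1) <= gap * R) by (apply Rmult_le_compat_l; lra).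
      nra. }
    assert ((alpha * exp (s * alpha) + / R) * C0 * F = k0 * F + C0 * F / R) by (unfold k0; field; lra).
    unfold gap in *. lra. }
  assert (HFF : F <= k0 * F / c).
  { apply HFl. intros r [L [HL ->]]. apply Rmult_le_reg_l with c; auto.
    replace (c * (k0 * F / c)) with (k0 * F) by (field; lra). apply Hkey; auto. }
  assert (HF : F = 0).
  { assert (c * F <= k0 * F).
    { replace (k0 * F) with (c * (k0 * F / c)) by (field; lra). apply Rmult_le_compat_l; lra. }
    nra. }
  intros x.
  assert (Hgx : g x <= 0).
  { rewrite <- HF. replace (g x) with (fin_sum g (x :: nil)) by (simpl; ring).
    apply HFs. constructor; [intros []|constructor]. }
  assert (Hfx : f x = 0).
  { unfold g in Hgx. pose proof (Hf x); pose proof (Hmu x); pose proof (exp_pos (- alpha * d x x0)).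
    destruct (Req_dec (f x) 0); auto.
    assert (0 < f x * exp (- alpha * d x x0) * mu x) by (apply Rmult_lt_0_compat; [apply Rmult_lt_0_compat|]; lra).
    lra. }
  unfold f, rpow in Hfx. destruct Rle_dec as [h|h].
  - pose proof (Rabs_pos (u x)). assert (Rabs (u x) = 0) by lra.
    destruct (Req_dec (u x) 0); auto. exfalso. apply Rabs_no_R0 in H1. contradiction.
  - pose proof (Rpower_pos' (Rabs (u x)) p). lra.
Qed.
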